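(* Let $A\in\mathrm{GL}_{n}(\mathbb{Z})$ be diagonalizable over $\mathbb{C}$ and have no eigenvalue of absolute value $1$. Then every length function $l$ on $G=\mathbb{Z}^{n}\rtimes_{A}\mathbb{Z}$ vanishes on $\mathbb{Z}^{n}$.
   Context: $\mathbb{Z}^{n}\rtimes_{A}\mathbb{Z}$ is the semidirect product in which a generator of $\mathbb{Z}$ acts on $\mathbb{Z}^n$ by $A$. A length function on a group $G$ is a function $l:G\to[0,\infty)$ such that $l(g^{n})=|n|\,l(g)$ for all $g\in G,n\in\mathbb{Z}$; $l(hgh^{-1})=l(g)$ for all $g,h$; and $l(ab)\leq l(a)+l(b)$ whenever $a,b$ commute. *)

(* Defs.v *)
From mathcomp Require Import all_boot all_order all_algebra.
From mathcomp Require Import algC.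
From mathcomp Require Import reals.
Set Implicit Arguments. Unset Strict Implicit. Unset Printing Implicit Defensive.
Import Order.TTheory GRing.Theory Num.Theory.
Local Open Scope ring_scope.

(* Integer powers A^k (k : int) of a square integer matrix A; for k < 0 this
   uses invmx A, which is the genuine inverse when A \in unitmx (A in GL_n(Z)). *)
Definition mxZpow (n : nat) (A : 'M[int]_n) (k : int) : 'M[int]_n :=
  match k with
  | Posz m => iter m (mulmx A) 1%:M
  | Negz m => iter m.+1 (mulmx (invmx A)) 1%:M
  end.

(* Elements of G = Z^n ⋊_A Z are pairs (v, k), v in Z^n (column vectors), k in Z;
   the generator of Z acts on Z^n by v |-> A v, so
   (v, k) * (w, m) = (v + A^k w, k + m). *)
Definition sdp (n : nat) := ('cV[int]_n * int)%type.

Definition sdp_one (n : nat) : sdp n := (0, 0).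

Definition sdp_mul (n : nat) (A : 'M[int]_n) (g h : sdp n) : sdp n :=
  (g.1 + mxZpow A g.2 *m h.1, g.2 + h.2).

Definition sdp_inv (n : nat) (A : 'M[int]_n) (g : sdp n) : sdp n :=
  (- (mxZpow A (- g.2) *m g.1), - g.2).

Definition sdp_pow (n : nat) (A : 'M[int]_n) (g : sdp n) (k : int) : sdp n :=
  match k with
  | Posz m => iter m (sdp_mul A g) (sdp_one n)
  | Negz m => iter m.+1 (sdp_mul A (sdp_inv A g)) (sdp_one n)
  end.

Definition length_function (R : realType) (n : nat) (A : 'M[int]_n)
    (l : sdp n -> R) : Prop :=
  [/\ (forall g, 0 <= l g),
      (forall g (k : int), l (sdp_pow A g k) = `|k|%:~R * l g),
      (forall g h, l (sdp_mul A (sdp_mul A h g) (sdp_inv A h)) = l g)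
    & (forall a b, sdp_mul A a b = sdp_mul A b a ->
                   l (sdp_mul A a b) <= l a + l b)].

Definition mxC (n : nat) (A : 'M[int]_n) : 'M[algC]_n := map_mx intr A.

(* Main.v *)
Require Import Defs.
From mathcomp Require Import all_boot all_order all_algebra.
From mathcomp Require Import algC reals ring.
Import Order.TTheory GRing.Theory Num.Theory.
Local Open Scope ring_scope.

Section Nu.
Variable F : numFieldType.
Implicit Types p q : {poly F}.

Definition nu p := \sum_(0 <= i < size p) `|p`_i|.

Lemma nu_ge0 p : 0 <= nu p.
Proof. by apply: sumr_ge0 => i _; rewrite normr_ge0. Qed.

Lemma nu_widen N p : (size p <= N)%N -> nu p = \sum_(0 <= i < N) `|p`_i|.
Proof.
move=> hN; rewrite /nu (@big_cat_nat _ _ _ (size p) 0 N _ _ (leq0n _) hN) /=.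
rewrite [X in _ = _ + X]big1_seq ?addr0 // => i /andP[_].
by rewrite mem_index_iota => /andP[hi _]; rewrite nth_default ?normr0.
Qed.

Lemma nu_le N p : \sum_(0 <= i < N) `|p`_i| <= nu p.
Proof.
rewrite (@nu_widen (maxn N (size p)) _ (leq_maxr N (size p))).
rewrite (@big_cat_nat _ _ _ N 0 _ _ _ (leq0n _) (leq_maxl N (size p))) /= lerDl.
by apply: sumr_ge0 => i _; rewrite normr_ge0.
Qed.

Lemma nuD p q : nu (p + q) <= nu p + nu q.
Proof.
set N := maxn (size p) (size q).
have hp : (size p <= N)%N by rewrite leq_maxl.
have hq : (size q <= N)%N by rewrite leq_maxr.
have hpq : (size (p + q)%R <= N)%N by rewrite (leq_trans (size_polyD _ _)) // geq_max hp hq.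
rewrite (nu_widen _ _ hp) (nu_widen _ _ hq) (nu_widen _ _ hpq) -big_split /=.
by apply: ler_sum => i _; rewrite coefD ler_normD.
Qed.

Lemma nuZ c p : nu (c%:P * p) <= `|c| * nu p.
Proof.
rewrite mul_polyC.
have h : (size (c *: p) <= size p)%N by apply: size_scale_leq.
rewrite (nu_widen _ _ h) /nu mulr_sumr; apply: ler_sum => i _.
by rewrite coefZ normrM.
Qed.

Lemma nuMX p : nu (p * 'X) <= nu p.
Proof.
have h : (size (p * 'X)%R <= (size p).+1)%N.
  by rewrite (leq_trans (size_polyMleq _ _)) // size_polyX addn2.
rewrite (nu_widen _ _ h) big_nat_recl // coefMX eqxx normr0 add0r.
rewrite /nu; apply: ler_sum => i _; rewrite coefMX /=.
by [].
Qed.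

Lemma nuXn s : nu ('X^s : {poly F}) <= 1.
Proof.
rewrite /nu size_polyXn big_nat_recr //= coefXn eqxx normr1 big1_seq ?add0r //.
move=> i /andP[_]; rewrite mem_index_iota => /andP[_ hi].
by rewrite coefXn (ltn_eqF hi) normr0.
Qed.


Definition rho (x : F) := if `|x| <= 1 then `|x| else `|x|^-1.

Lemma rho_ge0 x : 0 <= rho x.
Proof. by rewrite /rho; case: ifP => _; rewrite ?invr_ge0 normr_ge0. Qed.

Lemma nu0 : nu 0 = 0.
Proof. by rewrite /nu size_poly0 big_geq. Qed.

Lemma partB (I : Type) (r : seq I) (f : I -> F) :
  (\sum_(i <- r) rho (f i)) *+ 2 <= 1 ->
  exists C s E, [/\ C != 0, \prod_(i <- r) ('X - (f i)%:P) = C *: ('X^s + E)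
                  & nu E <= (\sum_(i <- r) rho (f i)) *+ 2].
Proof.
elim: r => [|i r IH] /=.
  move=> _; exists 1, 0%N, 0; split; first exact: oner_neq0.
    by rewrite big_nil expr0 addr0 scale1r.
  by rewrite nu0 big_nil mul0rn.
rewrite !big_cons => hS.
have hS' : (\sum_(j <- r) rho (f j)) *+ 2 <= 1.
  by apply: le_trans hS; rewrite mulrnDl lerDr mulrn_wge0 // rho_ge0.
have [C [s [E [hC hE hnu]]]] := IH hS'.
have hnu1 : nu E <= 1 := le_trans hnu hS'.
set mu := f i.
rewrite hE.
case: (boolP (`|mu| <= 1)) => hmu.
  exists C, s.+1, (E * 'X + (- mu)%:P * 'X^s + (- mu)%:P * E); split => //.
    rewrite -!mul_polyC exprSr; ring.
  rewrite /rho hmu mulrnDl.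
  have h1 := nuMX E; have h2 := nuZ (- mu) ('X^s); have h3 := nuXn s.
  have h2' := nuZ (- mu) E.
  rewrite normrN in h2 h2'.
  have h5 : nu ((- mu)%:P * 'X^s) <= `|mu|.
    by apply: le_trans h2 _; rewrite -{2}(mulr1 `|mu|) ler_wpM2l.
  have h6 : nu ((- mu)%:P * E) <= `|mu|.
    by apply: le_trans h2' _; rewrite -{2}(mulr1 `|mu|) ler_wpM2l.
  apply: (le_trans (nuD _ _)); apply: (le_trans (lerD (nuD _ _) (lexx _))).
  apply: (le_trans (lerD (lerD h1 h5) h6)).
  by rewrite mulr2n -addrA addrC lerD2l.
have mu0 : mu != 0.
  by apply: contraNneq hmu => ->; rewrite normr0 ler01.
have hlin : 'X - mu%:P = (- mu)%:P * (1 + (- mu^-1)%:P * 'X).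
  rewrite mulrDr mulr1 mulrA -polyCM mulrNN mulfV // polyC1 mul1r polyCN.
  by rewrite addrC.
exists (- mu * C), s, (E + (- mu^-1)%:P * 'X^(s.+1) + (- mu^-1)%:P * (E * 'X)).
split.
- by rewrite mulf_neq0 // oppr_eq0.
- rewrite hlin -!mul_polyC polyCM exprSr; ring.
have hm : `|- mu^-1| = `|mu|^-1 by rewrite normrN normrV // unitfE.
rewrite /rho (negbTE hmu) mulrnDl.
have hm0 : 0 <= `|mu|^-1 by rewrite invr_ge0 normr_ge0.
have h1 := nuMX E; have h3 := nuXn s.+1.
have h2 := nuZ (- mu^-1) ('X^(s.+1)); have h2' := nuZ (- mu^-1) (E * 'X).
rewrite hm in h2 h2'.
have h5 : nu ((- mu^-1)%:P * 'X^(s.+1)) <= `|mu|^-1.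
  by apply: le_trans h2 _; rewrite -{2}(mulr1 `|mu|^-1) ler_wpM2l.
have h6 : nu ((- mu^-1)%:P * (E * 'X)) <= `|mu|^-1.
  apply: le_trans h2' _; rewrite -{2}(mulr1 `|mu|^-1) ler_wpM2l //.
  exact: le_trans h1 hnu1.
apply: (le_trans (nuD _ _)); apply: (le_trans (lerD (nuD _ _) (lexx _))).
apply: (le_trans (lerD (lerD (lexx _) h5) h6)).
by rewrite mulr2n -addrA addrC lerD2l.
Qed.


Lemma coef_le_nu p j : `|p`_j| <= nu p.
Proof.
apply: le_trans (nu_le j.+1 p); rewrite big_nat_recr //= lerDr.
by apply: sumr_ge0 => i _; rewrite normr_ge0.
Qed.

Lemma partC p C s E : C != 0 -> p = C *: ('X^s + E) -> nu E < 1 ->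
  (s < size p)%N /\ \sum_(0 <= j < size p | j != s) `|p`_j| < `|p`_s|.
Proof.
move=> hC hp hE.
have cE j : p`_j = C * ((j == s)%:R + E`_j) by rewrite hp coefZ coefD coefXn.
have hEs : `|E`_s| < 1 := le_lt_trans (coef_le_nu E s) hE.
have h1 : 1 - `|E`_s| <= `|1 + E`_s|.
  rewrite lerBlDr; have := ler_normB (1 + E`_s) (E`_s).
  by rewrite addrK normr1.
have hCp : 0 < `|C| by rewrite normr_gt0.
have hps : `|p`_s| = `|C| * `|1 + E`_s| by rewrite cE eqxx normrM.
have hsz : (s < size p)%N.
  rewrite ltnNge; apply/negP => hle.
  have := nth_default 0 hle; move=> /(congr1 (fun x => `|x|)).
  rewrite normr0 hps => /eqP; rewrite mulf_eq0 normr_eq0 (negbTE hC) /= => /eqP h0.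
  by move: h1; rewrite h0 subr_le0 => /(lt_le_trans hEs); rewrite ltxx.
split => //.
have -> : \sum_(0 <= j < size p | j != s) `|p`_j| =
          `|C| * \sum_(0 <= j < size p | j != s) `|E`_j|.
  rewrite mulr_sumr; apply: eq_bigr => j hj.
  by rewrite cE (negbTE hj) add0r normrM.
rewrite hps ltr_pM2l //; apply: lt_le_trans h1.
rewrite ltrBrDr; apply: le_lt_trans hE; apply: le_trans (nu_le (size p) E).
rewrite [X in _ <= X](bigD1_seq s) /= ?iota_uniq //; first by rewrite addrC.
by rewrite mem_iota add0n subn0 hsz.
Qed.

End Nu.
Arguments nu {F} p.
Arguments rho {F} x.

Lemma bern (t : algC) k : 0 <= t -> 1 + k%:R * t <= (1 + t) ^+ k.
Proof.
move=> t0; elim: k => [|k IH]; first by rewrite mul0r addr0 expr0.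
have t1 : 0 <= 1 + t by rewrite addr_ge0.
rewrite exprSr; apply: le_trans (ler_wpM2r t1 IH).
rewrite -subr_ge0.
have -> : (1 + k%:R * t) * (1 + t) - (1 + k.+1%:R * t) = k%:R * t * t.
  rewrite -natr1; ring.
by rewrite !mulr_ge0.
Qed.

Lemma decay (r eps : algC) : 0 <= r -> r < 1 -> 0 < eps ->
  exists K, forall k, (K <= k)%N -> r ^+ k <= eps.
Proof.
move=> r0 r1 e0.
have [->|rn0] := eqVneq r 0.
  exists 1%N => k hk; rewrite expr0n; case: k hk => // k _ /=; exact: ltW.
have rp : 0 < r by rewrite lt_def rn0.
set t := r^-1 - 1.
have tp : 0 < t by rewrite subr_gt0 invf_gt1.
have etp : 0 < eps * t by rewrite mulr_gt0.
exists (Num.bound ((eps * t)^-1)) => k hk.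
have hi : 0 <= (eps * t)^-1 by rewrite invr_ge0 ltW.
have hb := archi_boundP hi.
have hk' : (eps * t)^-1 < k%:R.
  by apply: lt_le_trans hb _; rewrite ler_nat.
have hkt : eps^-1 < k%:R * t.
  move: hk'; rewrite -(ltr_pM2r tp) invfM -mulrA mulVf ?mulr1 //.
  by rewrite gt_eqF.
have hB := @bern t k (ltW tp).
have hr : r^-1 = 1 + t by rewrite /t addrC subrK.
have : eps^-1 < (r ^+ k)^-1.
  rewrite -exprVn hr; apply: lt_le_trans hB; apply: lt_le_trans hkt _.
  by rewrite lerDr.
rewrite ltf_pV2 ?posrE ?exprn_gt0 //; exact: ltW.
Qed.

Lemma decay_seq (I : eqType) (s : seq I) (g : I -> algC) eps :
  0 < eps -> (forall i, 0 <= g i /\ g i < 1) ->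
  exists K, forall k, (K <= k)%N -> forall i, i \in s -> g i ^+ k <= eps.
Proof.
move=> e0 hg; elim: s => [|a s [K IH]]; first by exists 0%N.
have [g0 g1] := hg a.
have [Ka hKa] := decay _ _ g0 g1 e0.
exists (maxn K Ka) => k; rewrite geq_max => /andP[h1 h2] i.
rewrite in_cons => /orP[/eqP->|hi]; first exact: hKa.
exact: IH.
Qed.

Section LF.
Variables (R : realType) (n : nat) (A : 'M[int]_n.+1) (l : sdp n.+1 -> R).
Hypothesis hl : length_function A l.

Let L (w : 'cV[int]_n.+1) := l (w, 0).

Lemma iter_vec (u : 'cV[int]_n.+1) m :
  iter m (sdp_mul A (u, 0)) (sdp_one n.+1) = ((m%:Z) *: u, 0).
Proof.
elim: m => [|m IH]; first by rewrite /= scale0r.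
rewrite iterS IH /sdp_mul /= mul1mx addr0 intS scalerDl scale1r.
by [].
Qed.

Lemma pow_vec (w : 'cV[int]_n.+1) (c : int) : sdp_pow A (w, 0) c = (c *: w, 0).
Proof.
case: c => m; first exact: iter_vec.
have e : sdp_inv A (w, 0) = (- w, 0) by rewrite /sdp_inv /= oppr0 /= mul1mx.
by rewrite /sdp_pow e iter_vec NegzE scaleNr scalerN.
Qed.

Lemma L_scale w (c : int) : L (c *: w) = `|c|%:~R * L w.
Proof. by move: (hl); rewrite /length_function => -[_ h _ _]; rewrite /L -pow_vec h. Qed.

Lemma L_ge0 w : 0 <= L w.
Proof. by move: (hl); rewrite /length_function => -[h _ _ _]; apply: h. Qed.

Lemma L0 : L 0 = 0.
Proof. by rewrite -(scale0r (0 : 'cV[int]_n.+1)) L_scale normr0 mul0r. Qed.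

Lemma L_opp w : L (- w) = L w.
Proof. by rewrite -scaleN1r L_scale normrN normr1 mul1r. Qed.

Lemma L_add w u : L (w + u) <= L w + L u.
Proof.
move: (hl); rewrite /length_function => -[_ _ _ h].
have e : sdp_mul A (w, 0) (u, 0) = (w + u, 0).
  by rewrite /sdp_mul /= mul1mx addr0.
have e' : sdp_mul A (u, 0) (w, 0) = (w + u, 0).
  by rewrite /sdp_mul /= mul1mx addr0 addrC.
by have := h (w, 0) (u, 0); rewrite e e'; apply.
Qed.

Lemma L_A w : L (A *m w) = L w.
Proof.
move: (hl); rewrite /length_function => -[_ _ h _].
have := h (w, 0) (0, 1).
have -> : sdp_mul A (sdp_mul A (0, 1) (w, 0)) (sdp_inv A (0, 1)) = (A *m w, 0).
  rewrite /sdp_mul /sdp_inv /= !mulmx0 oppr0 mulmx0 addr0 add0r mulmx1.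
  by [].
by [].
Qed.

Lemma L_pow k w : L (A ^+ k *m w) = L w.
Proof.
elim: k => [|k IH]; first by rewrite expr0 mul1mx.
by rewrite exprS -mulmxE -mulmxA L_A.
Qed.

Lemma L_sum (I : Type) (r : seq I) (P : pred I) (f : I -> 'cV[int]_n.+1) :
  L (\sum_(i <- r | P i) f i) <= \sum_(i <- r | P i) L (f i).
Proof.
apply: (big_ind2 (fun x y => L x <= y)); first by rewrite L0.
  by move=> x1 x2 y1 y2 h1 h2; apply: le_trans (L_add _ _) (lerD h1 h2).
by [].
Qed.

Lemma partD (p : {poly int}) k s v :
  horner_mx (A ^+ k) p = 0 -> (s < size p)%N ->
  \sum_(0 <= j < size p | j != s) `|p`_j| < `|p`_s| ->
  L v = 0.
Proof.
move=> hp hs hlt.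
set B := A ^+ k.
have hB j : L (B ^+ j *m v) = L v by rewrite /B -exprM L_pow.
have hsum : \sum_(0 <= i < size p) p`_i *: (B ^+ i *m v) = 0.
  rewrite -[RHS](mul0mx _ v) -hp -[p in horner_mx B p]coefK poly_def.
  rewrite raddf_sum /= mulmx_suml big_mkord; apply: eq_bigr => i _.
  by rewrite horner_mxZ rmorphXn /= horner_mx_X scalemxAl.
rewrite (bigD1_seq s) /= ?iota_uniq ?mem_iota ?add0n ?subn0 // in hsum.
move/eqP: hsum; rewrite addr_eq0 => /eqP hs'.
have h1 : `|p`_s|%:~R * L v <=
    (\sum_(0 <= j < size p | j != s) `|p`_j|)%:~R * L v.
  rewrite -(hB s) -L_scale hs' L_opp.
  apply: le_trans; first exact: L_sum.
  rewrite hB rmorph_sum /= mulr_suml; apply: ler_sum => j _.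
  by rewrite L_scale hB.
have := L_ge0 v; rewrite le_eqVlt => /orP[/eqP<-//|hL].
have := ltr_pM2r hL ((\sum_(0 <= j < size p | j != s) `|p`_j|)%:~R) (`|p`_s|)%:~R.
by rewrite ltr_int hlt ltNge h1.
Qed.

End LF.

Lemma char_poly_sim n (P M : 'M[algC]_n) : P \in unitmx ->
  char_poly (invmx P *m M *m P) = char_poly M.
Proof.
move=> hP; rewrite /char_poly /char_poly_mx.
set Q := map_mx polyC P; set Qi := map_mx polyC (invmx P).
have hQ : Qi *m Q = 1%:M by rewrite -map_mxM mulVmx // map_mx1.
have -> : 'X%:M - map_mx polyC (invmx P *m M *m P) =
          Qi *m ('X%:M - map_mx polyC M) *m Q.
  rewrite mulmxBr mulmxBl !map_mxM -/Qi -/Q scalar_mxC.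
  by rewrite -[('X%:M *m Qi) *m Q]mulmxA hQ mulmx1.
by rewrite !det_mulmx mulrAC -det_mulmx hQ det1 mul1r.
Qed.

Lemma mxC_pow n (A : 'M[int]_n.+1) k : mxC (A ^+ k) = (mxC A) ^+ k.
Proof.
elim: k => [|k IH]; first by rewrite !expr0 /mxC map_mx1.
by rewrite !exprS -IH -!mulmxE /mxC map_mxM.
Qed.

Lemma conj_pow n (P : 'M[algC]_n.+1) (D : 'rV[algC]_n.+1) k : P \in unitmx ->
  (invmx P *m diag_mx D *m P) ^+ k =
  invmx P *m diag_mx (\row_j (D 0 j ^+ k)) *m P.
Proof.
move=> hP; elim: k => [|k IH].
  have -> : \row_j (D 0 j ^+ 0) = \row_j 1 :> 'rV[algC]_n.+1.
    by apply/rowP => j; rewrite !mxE expr0.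
  rewrite expr0; have -> : diag_mx (\row_j 1) = 1%:M :> 'M[algC]_n.+1.
    by apply/matrixP => i j; rewrite !mxE.
  by rewrite mulmx1 mulVmx.
rewrite exprS IH -!mulmxE !mulmxA -[X in X *m diag_mx _ *m _](mulmxA _ P).
rewrite mulmxV // mulmx1 -(mulmxA _ (diag_mx D)) mulmx_diag.
congr (_ *m diag_mx _ *m _); apply/rowP => j; rewrite !mxE.
by rewrite exprS.
Qed.

Theorem lemma8 (R : realType) (n : nat) (A : 'M[int]_n) :
  A \in unitmx ->
  diagonalizable (mxC A) ->
  (forall a : algC, eigenvalue (mxC A) a -> `|a| != 1) ->
  forall l : sdp n -> R, length_function A l ->
  forall v : 'cV[int]_n, l (v, 0) = 0.
Proof.
move=> hU hD hE l hl v.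
case: n A v hU hD hE l hl => [|n] A v hU hD hE l hl.
  rewrite (flatmx0 v).
  move: (hl); rewrite /length_function => -[_ h _ _].
  by have := h (0, 0) 0; rewrite normr0 mul0r.
have [P hP hPD] := hD.
have /(diagonalizable_forLR hP) [D hGD] := hPD.
rewrite mxpoly.conjVmx // in hGD.
have hcharG : char_poly (mxC A) = \prod_(j < n.+1) ('X - (D 0 j)%:P).
  rewrite hGD char_poly_sim // char_poly_trig ?diag_mx_is_trig //.
  by apply: eq_bigr => j _; rewrite mxE eqxx mulr1n.
have hDn1 i : `|D 0 i| != 1.
  apply: hE; rewrite eigenvalue_root_char hcharG /root horner_prod (bigD1 i) //=.
  by rewrite hornerXsubC subrr mul0r.
pose r := fun i : 'I_n.+1 => if `|D 0 i| < 1 then `|D 0 i| else `|D 0 i|^-1.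
have hgt1 i : ~~ (`|D 0 i| < 1) -> 1 < `|D 0 i|.
  move=> h; rewrite lt_neqAle eq_sym hDn1 /= real_leNgt ?h ?realE ?normr_ge0 ?ler01 //.
have hr i : 0 <= r i /\ r i < 1.
  rewrite /r; case: ifP => h; first by rewrite normr_ge0.
  have h1 := hgt1 i (negbT h).
  by rewrite invr_ge0 normr_ge0 invf_lt1 // (lt_trans ltr01).
pose N := n.+1.
pose eps : algC := ((N * 2).+1)%:R^-1.
have e0 : 0 < eps by rewrite invr_gt0 ltr0Sn.
have [K hK] := @decay_seq _ (enum 'I_N) r eps e0 hr.
pose k := K.+1.
have hrho i : rho (D 0 i ^+ k) <= eps.
  have := hK k (leqnSn K) i (mem_enum _ i).
  suff -> : rho (D 0 i ^+ k) = r i ^+ k by [].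
  rewrite /rho normrX /r; have [h|h] := boolP (`|D 0 i| < 1).
    by rewrite (exprn_ile1 _ (normr_ge0 _) (ltW h)).
  have h1 := hgt1 i h.
  have h2 : 1 < `|D 0 i| ^+ k by rewrite exprn_egt1.
  by rewrite (lt_geF h2) exprVn.
have hsum : (\sum_(j < N) rho (D 0 j ^+ k)) *+ 2 < 1.
  have hs : \sum_(j < N) rho (D 0 j ^+ k) <= eps *+ N.
    by rewrite -[X in eps *+ X](card_ord N) -sumr_const; apply: ler_sum.
  apply: le_lt_trans (ler_wMn2r 2 hs) _.
  rewrite -mulrnA -mulr_natl ltr_pdivrMr ?ltr0Sn // mul1r ltr_nat ltnSn.
  by [].
have [C [s [E [hC hq hnu]]]] := @partB _ _ (index_enum 'I_N) (fun j => D 0 j ^+ k) (ltW hsum).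
pose B := A ^+ k.
have hq' : char_poly (mxC B) = \prod_(j < N) ('X - (D 0 j ^+ k)%:P).
  rewrite /B mxC_pow hGD conj_pow // char_poly_sim // char_poly_trig ?diag_mx_is_trig //.
  by apply: eq_bigr => j _; rewrite !mxE eqxx mulr1n.
have hmap : map_poly intr (char_poly B) = char_poly (mxC B).
  by rewrite /mxC map_char_poly.
have hq2 : char_poly (mxC B) = C *: ('X^s + E) by rewrite hq' hq.
have [hsq hlt] := @partC _ _ _ _ _ hC hq2 (le_lt_trans hnu hsum).
have hs2 : (s < size (char_poly B))%N by move: hsq; rewrite !size_char_poly.
apply: (@partD _ _ _ _ hl _ k s _ (Cayley_Hamilton B) hs2).
move: hlt; rewrite !size_char_poly -hmap coef_map /= -intr_norm.
under eq_bigr do rewrite coef_map /= -intr_norm.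
by rewrite -rmorph_sum ltr_int.
Qed.
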